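(* Let ${\cal C}$ be a semi-degenerate congruence-modular variety and $A\in{\cal C}$ a semiprime algebra. For any nonzero cardinal $\kappa$, the condition $(1)_{\kappa,{\rm Con}(A)}$ holds iff the condition $(1)_{\kappa,{\rm Con}(A)/\equiv_A}$ holds.
   Context: ${\cal C}$ semi-degenerate: no nontrivial member has a one-element subalgebra. ${\rm Con}(A)$: congruence lattice of $A$ with bounds $\Delta_A,\nabla_A=A^2$; $[\cdot,\cdot]_A$: the modular commutator. A congruence $\phi\ne\nabla_A$ is prime if $[\theta,\zeta]_A\subseteq\phi$ implies $\theta\subseteq\phi$ or $\zeta\subseteq\phi$. $\rho_A(\theta)$: intersection of all prime congruences containing $\theta$. $A$ semiprime: $\rho_A(\Delta_A)=\Delta_A$. $\theta\equiv_A\zeta$ iff $\rho_A(\theta)=\rho_A(\zeta)$; $\equiv_A$ is a congruence of the lattice ${\rm Con}(A)$ and ${\rm Con}(A)/\equiv_A$ is the quotient bounded lattice. For a bounded lattice $L$: ${\rm Ann}_L(U)=\{x\in L\mid x\wedge u=0\ \forall u\in U\}$, $(e]_L=\{x\mid x\le e\}$, ${\cal B}(L)$ the set of complemented elements; $(1)_{\kappa,L}$: for each $U\subseteq L$ with $|U|\le\kappa$ there is $e\in{\cal B}(L)$ with ${\rm Ann}_L(U)=(e]_L$. *)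

(* Defs.v *)
From Stdlib Require Import FunctionalExtensionality.
From mathcomp Require Import all_boot.

Set Implicit Arguments.
Unset Strict Implicit.
Unset Printing Implicit Defensive.

Record signature := Signature { sym :> Type; arity : sym -> nat }.

Record algebra (S : signature) := Algebra {
  carrier :> Type;
  interp : forall f : S, ('I_(arity f) -> carrier) -> carrier }.
Arguments interp {S} a f _ : rename.

Inductive term (S : signature) (X : Type) : Type :=
  | Var : X -> term S X
  | App : forall f : S, ('I_(arity f) -> term S X) -> term S X.
Arguments Var {S X}.
Arguments App {S X}.

Fixpoint eval (S : signature) (A : algebra S) (X : Type) (v : X -> A)
    (t : term S X) : A :=
  match t with
  | Var x => v x
  | App f ts => interp A f (fun i => @eval S A X v (ts i))
  end.
Arguments eval {S} A {X} v t.

Definition subrel (T : Type) (r s : T -> T -> Prop) := forall x y, r x y -> s x y.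
Definition releq (T : Type) (r s : T -> T -> Prop) := subrel r s /\ subrel s r.

Definition is_congruence (S : signature) (A : algebra S) (r : A -> A -> Prop) :=
  [/\ (forall x, r x x),
      (forall x y, r x y -> r y x),
      (forall x y z, r x y -> r y z -> r x z) &
      (forall f (a b : 'I_(arity f) -> A),
          (forall i, r (a i) (b i)) -> r (interp A f a) (interp A f b))].
Arguments is_congruence {S} A r.

Record congruence (S : signature) (A : algebra S) := Congruence {
  crel :> A -> A -> Prop;
  crelP : is_congruence A crel }.

Lemma inter_cong (S : signature) (A : algebra S) (P : (A -> A -> Prop) -> Prop) :
  is_congruence A (fun x y => forall r, P r -> is_congruence A r -> r x y).
Proof.
split.
- by move=> x r _ [rf _ _ _].
- by move=> x y H r Pr cr; case: (cr) => _ rs _ _; apply: rs; apply: H.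
- move=> x y z H1 H2 r Pr cr; case: (cr) => _ _ rt _.
  by apply: (rt _ y); [apply: H1|apply: H2].
- move=> f a b H r Pr cr; case: (cr) => _ _ _ rc.
  by apply: rc => i; apply: H.
Qed.

Arguments inter_cong {S} A P.

Lemma eq_cong (S : signature) (A : algebra S) : is_congruence A (@eq A).
Proof.
split => //.
- by move=> x y z -> ->.
- by move=> f a b H; rewrite (functional_extensionality a b H).
Qed.

Lemma top_cong (S : signature) (A : algebra S) : is_congruence A (fun _ _ => True).
Proof. by split. Qed.

Lemma meet_cong (S : signature) (A : algebra S) (th ze : congruence A) :
  is_congruence A (fun x y => th x y /\ ze x y).
Proof.
case: th => th [t1 t2 t3 t4]; case: ze => ze [z1 z2 z3 z4]; split => /=.
- by move=> x; split.
- by move=> x y [] ? ?; split; auto.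
- by move=> x y z [] ? ? [] ? ?; split; [apply: (t3 _ y)|apply: (z3 _ y)].
- by move=> f a b H; split; [apply: t4|apply: z4] => i; case: (H i).
Qed.

Definition cbot (S : signature) (A : algebra S) : congruence A :=
  Congruence (eq_cong A).
Definition ctop (S : signature) (A : algebra S) : congruence A :=
  Congruence (top_cong A).
Definition cmeet (S : signature) (A : algebra S) (th ze : congruence A) :
  congruence A := Congruence (meet_cong th ze).
Definition cjoin (S : signature) (A : algebra S) (th ze : congruence A) :
  congruence A :=
  Congruence (inter_cong A (fun r => subrel th r /\ subrel ze r)).

(* The (term-condition) commutator; in congruence-modular varieties it *)
(* is the modular commutator.                                          *)

Definition sumval (T : Type) (m n : nat) (x : 'I_m -> T) (u : 'I_n -> T) :
  'I_m + 'I_n -> T :=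
  fun z => match z with inl i => x i | inr j => u j end.

Definition centralizes (S : signature) (A : algebra S)
    (al be de : A -> A -> Prop) :=
  forall (m n : nat) (t : term S ('I_m + 'I_n)) (x y : 'I_m -> A)
         (u v : 'I_n -> A),
    (forall i, al (x i) (y i)) -> (forall j, be (u j) (v j)) ->
    de (eval A (sumval x u) t) (eval A (sumval x v) t) ->
    de (eval A (sumval y u) t) (eval A (sumval y v) t).
Arguments centralizes {S} A al be de.

Definition commutator (S : signature) (A : algebra S) (al be : A -> A -> Prop) :
  A -> A -> Prop :=
  fun a b => forall de, is_congruence A de -> centralizes A al be de -> de a b.
Arguments commutator {S} A al be _ _.

Definition prime_cong (S : signature) (A : algebra S) (phi : congruence A) :=
  (exists x y : A, ~ phi x y) /\
  forall th ze : congruence A,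
    subrel (commutator A th ze) phi -> subrel th phi \/ subrel ze phi.

Definition rho (S : signature) (A : algebra S) (th : A -> A -> Prop) :
  A -> A -> Prop :=
  fun x y => forall phi : congruence A, prime_cong phi -> subrel th phi -> phi x y.
Arguments rho {S} A th _ _.

Definition semiprime (S : signature) (A : algebra S) :=
  releq (rho A (@eq A)) (@eq A).

Definition rad_equiv (S : signature) (A : algebra S) (th ze : congruence A) :=
  releq (rho A th) (rho A ze).

(* Bounded lattices presented as setoids (carrier + lattice equality); *)
(* this allows a uniform treatment of Con(A) and Con(A)/==_A.          *)

Unset Implicit Arguments.
Record slattice := SLattice {
  scar : Type;
  seqv : scar -> scar -> Prop;
  smeet : scar -> scar -> scar;
  sjoin : scar -> scar -> scar;
  sbot : scar;
  stop : scar }.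

Definition sle (L : slattice) (x y : scar L) := seqv L (smeet L x y) x.

Definition sl_complemented (L : slattice) (e : scar L) :=
  exists f, seqv L (smeet L e f) (sbot L) /\ seqv L (sjoin L e f) (stop L).

Definition in_Ann (L : slattice) (U : scar L -> Prop) (x : scar L) :=
  forall u, U u -> seqv L (smeet L x u) (sbot L).

(* |U| <= |K|, counting elements of L (i.e. seqv-classes) *)
Definition card_le (L : slattice) (U : scar L -> Prop) (K : Type) :=
  exists f : K -> scar L, forall u, U u -> exists k, seqv L u (f k).

(* condition (1)_{kappa, L}, kappa = |K| *)
Definition cond1 (K : Type) (L : slattice) :=
  forall U : scar L -> Prop, card_le L U K ->
    exists e, sl_complemented L e /\ forall x, in_Ann L U x <-> sle L x e.

Set Implicit Arguments.

Definition Con (S : signature) (A : algebra S) : slattice :=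
  @SLattice (congruence A) (fun th ze => releq th ze)
    (@cmeet S A) (@cjoin S A) (cbot A) (ctop A).

Definition ConQ (S : signature) (A : algebra S) : slattice :=
  @SLattice (congruence A) (@rad_equiv S A)
    (@cmeet S A) (@cjoin S A) (cbot A) (ctop A).

Definition identity (S : signature) := (term S nat * term S nat)%type.

Definition satisfies (S : signature) (E : identity S -> Prop) (A : algebra S) :=
  forall e, E e -> forall v : nat -> A, eval A v e.1 = eval A v e.2.

Definition modular_con (S : signature) (A : algebra S) :=
  forall al be ga : congruence A, subrel al ga ->
    subrel (cmeet (cjoin al be) ga) (cjoin al (cmeet be ga)).

Definition cong_modular_variety (S : signature) (E : identity S -> Prop) :=
  forall A : algebra S, satisfies E A -> modular_con A.

Definition semi_degenerate (S : signature) (E : identity S -> Prop) :=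
  forall A : algebra S, satisfies E A -> (exists x y : A, x <> y) ->
    ~ (exists a : A, forall (f : S) (args : 'I_(arity f) -> A),
          (forall i, args i = a) -> interp A f args = a).

(* Main.v *)
From Stdlib Require Import FunctionalExtensionality PropExtensionality ProofIrrelevance ClassicalEpsilon Classical.
From mathcomp Require Import all_boot.
From mathcomp Require boolp classical_sets.
Require Import Defs.

Set Implicit Arguments.
Unset Strict Implicit.
Unset Printing Implicit Defensive.


Section Basics.
Variables (S : signature) (A : algebra S).

Lemma cg_refl (r : congruence A) x : r x x.
Proof. by case: (crelP r) => h _ _ _; apply: h. Qed.
Lemma cg_sym (r : congruence A) x y : r x y -> r y x.
Proof. by case: (crelP r) => _ h _ _; apply: h. Qed.
Lemma cg_trans (r : congruence A) x y z : r x y -> r y z -> r x z.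
Proof. by case: (crelP r) => _ _ h _; apply: h. Qed.
Lemma cg_comp (r : congruence A) f (a b : 'I_(arity f) -> A) :
  (forall i, r (a i) (b i)) -> r (interp A f a) (interp A f b).
Proof. by case: (crelP r) => _ _ _ h; apply: h. Qed.

Lemma eval_congr (r : A -> A -> Prop) (hr : is_congruence A r) X (v w : X -> A) t :
  (forall x, r (v x) (w x)) -> r (eval A v t) (eval A w t).
Proof.
case: hr => _ _ _ hc Hvw; elim: t => [x|f ts IH] /=; first exact: Hvw.
by apply: hc => i; apply: IH.
Qed.

Lemma rho_ext (th : A -> A -> Prop) : subrel th (rho A th).
Proof. by move=> x y H phi _ sub; apply: sub. Qed.

Lemma rho_mono (th th' : A -> A -> Prop) : subrel th th' -> subrel (rho A th) (rho A th').
Proof. by move=> s x y H phi pp sub; apply: H => // a b /s; apply: sub. Qed.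

Lemma rho_idem (th : A -> A -> Prop) : subrel (rho A (rho A th)) (rho A th).
Proof. by move=> x y H phi pp sub; apply: H => // a b; apply; last exact: sub. Qed.

Lemma rho_cong (th : A -> A -> Prop) : is_congruence A (rho A th).
Proof.
split.
- by move=> x phi _ _; apply: cg_refl.
- by move=> x y H phi pp sub; apply: cg_sym; apply: H.
- by move=> x y z H1 H2 phi pp sub; apply: (cg_trans (H1 _ pp sub) (H2 _ pp sub)).
- by move=> f a b H phi pp sub; apply: cg_comp => i; apply: H.
Qed.

Definition rcong (th : A -> A -> Prop) : congruence A := Congruence (rho_cong th).

Lemma rho_top x y : rho A (ctop A) x y.
Proof.
move=> phi [[a [b nab]] _] sub; exfalso; apply: nab; exact: sub.
Qed.

Lemma comm_sub_l (x u : congruence A) : subrel (commutator A x u) x.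
Proof.
move=> a b H; apply: H; first by case: x.
move=> m n t xs ys us vs Hxy Huv Hx.
apply: (cg_trans (y := eval A (sumval xs us) t)).
  apply: (eval_congr (crelP x)) => [[i|j]] /=; [apply: cg_sym; apply: Hxy| apply: cg_refl].
apply: (cg_trans Hx).
apply: (eval_congr (crelP x)) => [[i|j]] /=; [apply: Hxy| apply: cg_refl].
Qed.

Lemma comm_sub_r (x u : congruence A) : subrel (commutator A x u) u.
Proof.
move=> a b H; apply: H; first by case: u.
move=> m n t xs ys us vs Hxy Huv Hx.
apply: (eval_congr (crelP u)) => [[i|j]] /=; [apply: cg_refl| apply: Huv].
Qed.

Lemma rho_meet (x u : congruence A) a b :
  rho A x a b -> rho A u a b -> rho A (cmeet x u) a b.
Proof.
move=> Hx Hu phi pp sub.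
have : subrel (commutator A x u) phi.
  move=> c d H; apply: sub; split; [exact: comm_sub_l H| exact: comm_sub_r H].
case: pp => pp1 /[dup] pp2 /(_ x u) h /h [] s; [exact: Hx| exact: Hu].
Qed.

Lemma rho_meet_inv (x u : congruence A) a b :
  rho A (cmeet x u) a b -> rho A x a b /\ rho A u a b.
Proof.
by move=> H; split; apply: (rho_mono _ H) => c d [].
Qed.

End Basics.


Lemma sig_eq (T : Type) (P : T -> Prop) (p q : {x : T | P x}) :
  proj1_sig p = proj1_sig q -> p = q.
Proof.
case: p => x px; case: q => y py /= exy; subst y.
by rewrite (proof_irrelevance _ px py).
Qed.

Section Constructions.
Variable S : signature.

Fixpoint tsubst X Y (s : X -> term S Y) (t : term S X) : term S Y :=
  match t with
  | Var x => s x
  | App f ts => App f (fun i => tsubst s (ts i))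
  end.

Lemma eval_subst (B : algebra S) X Y (s : X -> term S Y) (w : Y -> B) t :
  eval B w (tsubst s t) = eval B (fun x => eval B w (s x)) t.
Proof.
elim: t => [x|f ts IH] //=; congr (interp B f); apply: functional_extensionality => i.
exact: IH.
Qed.

Section Pair.
Variables (A : algebra S) (be : congruence A).
Definition pcar := {p : A * A | be p.1 p.2}.
Definition pr_interp f (args : 'I_(arity f) -> pcar) : pcar :=
  exist _ (interp A f (fun i => (proj1_sig (args i)).1),
           interp A f (fun i => (proj1_sig (args i)).2))
        (@cg_comp _ _ be f _ _ (fun i => proj2_sig (args i))).
Definition Apair : algebra S := @Algebra S pcar pr_interp.

Lemma eval_Apair X (v : X -> Apair) t :
  proj1_sig (eval Apair v t) =
  (eval A (fun x => (proj1_sig (v x)).1) t, eval A (fun x => (proj1_sig (v x)).2) t).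
Proof.
elim: t => [x|f ts IH] /=; first by case: (proj1_sig (v x)).
congr pair; congr (interp A f); apply: functional_extensionality => i; by rewrite IH.
Qed.

Lemma Apair_sat E : satisfies E A -> satisfies E Apair.
Proof.
move=> hA e he v; apply: sig_eq; rewrite !eval_Apair.
by rewrite (hA e he (fun x => (proj1_sig (v x)).1)) (hA e he (fun x => (proj1_sig (v x)).2)).
Qed.

Definition diag (x : A) : Apair := exist _ (x, x) (cg_refl be x).

Lemma diag_interp f (a : 'I_(arity f) -> A) :
  diag (interp A f a) = interp Apair f (fun i => diag (a i)).
Proof. by apply: sig_eq. Qed.

Definition pj0_rel (ga : congruence A) : Apair -> Apair -> Prop :=
  fun p q => ga (proj1_sig p).1 (proj1_sig q).1.
Definition pj1_rel (ga : congruence A) : Apair -> Apair -> Prop :=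
  fun p q => ga (proj1_sig p).2 (proj1_sig q).2.
Lemma pj0_cong ga : is_congruence Apair (pj0_rel ga).
Proof.
rewrite /pj0_rel; split.
- move=> x; exact: cg_refl.
- move=> x y; exact: cg_sym.
- move=> x y z; exact: cg_trans.
- by move=> f a b H /=; apply: cg_comp.
Qed.
Lemma pj1_cong ga : is_congruence Apair (pj1_rel ga).
Proof.
rewrite /pj1_rel; split.
- move=> x; exact: cg_refl.
- move=> x y; exact: cg_sym.
- move=> x y z; exact: cg_trans.
- by move=> f a b H /=; apply: cg_comp.
Qed.
Definition pj0 ga : congruence Apair := Congruence (pj0_cong ga).
Definition pj1 ga : congruence Apair := Congruence (pj1_cong ga).

End Pair.

Section Quot.
Variables (B : algebra S) (r : congruence B).
Definition qcar := {P : B -> Prop | exists b, P = r b}.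
Definition cls (b : B) : qcar := exist _ (r b) (ex_intro _ b erefl).
Definition rep (q : qcar) : B :=
  proj1_sig (constructive_indefinite_description _ (proj2_sig q)).
Lemma cls_rep q : cls (rep q) = q.
Proof.
apply: sig_eq; rewrite /rep /=.
by case: (constructive_indefinite_description _ _) => b /= ->.
Qed.
Lemma cls_eq a b : cls a = cls b <-> r a b.
Proof.
split.
- move=> h; have : proj1_sig (cls a) = proj1_sig (cls b) by rewrite h.
  move=> /= h2; have : r b b by apply: cg_refl.
  by rewrite -h2; apply.
- move=> h; apply: sig_eq => /=; apply: functional_extensionality => x.
  apply: propositional_extensionality; split => hx.
  + apply: cg_trans hx; exact: cg_sym.
  + exact: cg_trans hx.
Qed.
Lemma rep_cls b : r (rep (cls b)) b.
Proof. by apply/cls_eq; rewrite cls_rep. Qed.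

Definition q_interp f (args : 'I_(arity f) -> qcar) : qcar :=
  cls (interp B f (fun i => rep (args i))).
Definition Aquot : algebra S := @Algebra S qcar q_interp.

Lemma eval_quot X (v : X -> B) t :
  eval Aquot (fun x => cls (v x)) t = cls (eval B v t).
Proof.
elim: t => [x|f ts IH] //=; rewrite /q_interp; apply/cls_eq.
apply: cg_comp => i; rewrite IH; exact: rep_cls.
Qed.

Lemma Aquot_sat E : satisfies E B -> satisfies E Aquot.
Proof.
move=> hB e he v.
have -> : v = (fun x => cls (rep (v x))).
  by apply: functional_extensionality => x; rewrite cls_rep.
by rewrite !eval_quot hB.
Qed.
End Quot.

Section Pow.
Variables (B : algebra S) (J : Type).
Definition pow_interp f (args : 'I_(arity f) -> (J -> B)) : J -> B :=
  fun j => interp B f (fun i => args i j).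
Definition Apow : algebra S := @Algebra S (J -> B) pow_interp.
Lemma eval_pow X (v : X -> Apow) t j : eval Apow v t j = eval B (fun x => v x j) t.
Proof.
elim: t => [x|f ts IH] //=; rewrite /pow_interp; congr (interp B f).
by apply: functional_extensionality => i.
Qed.
Lemma Apow_sat E : satisfies E B -> satisfies E Apow.
Proof.
move=> hB e he v; apply: functional_extensionality => j.
by rewrite !eval_pow hB.
Qed.
End Pow.

End Constructions.


Section Theta.
Variables (S : signature) (B : algebra S) (P : B -> Prop).

Definition scons (p : B) (v : nat -> B) : nat -> B :=
  fun n => match n with 0 => p | n'.+1 => v n' end.

Definition Theta (p q : B) : Prop :=
  forall (t : term S nat) (v : nat -> B),
    P (eval B (scons p v) t) <-> P (eval B (scons q v) t).

Lemma Theta_step f (a b : 'I_(arity f) -> B) (k : 'I_(arity f)) :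
  Theta (a k) (b k) -> (forall i, i != k -> a i = b i) ->
  Theta (interp B f a) (interp B f b).
Proof.
move=> H hab t v.
pose W (m : nat) : B := match insub m with Some i => a i | None => a k end.
pose v' (m : nat) : B := if odd m then W m./2 else v m./2.
pose sg (m : nat) : term S nat :=
  match m with
  | 0 => App f (fun i => if i == k then Var 0 else Var (i.*2.+2))
  | j.+1 => Var (j.*2.+1)
  end.
have E z : (fun m => eval B (scons z v') (sg m)) =
           scons (interp B f (fun i => if i == k then z else a i)) v.
  apply: functional_extensionality => -[|j] /=.
  - congr (interp B f); apply: functional_extensionality => i.
    case: (i == k) => //=; rewrite /v' /= odd_double /= /W.
    by rewrite uphalf_double insubT ?ltn_ord // => h; f_equal; apply: val_inj.
  - by rewrite /v' /= odd_double /= half_double.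
have ea : (fun i => if i == k then a k else a i) = a.
  by apply: functional_extensionality => i; case: eqP => // ->.
have eb : (fun i => if i == k then b k else a i) = b.
  by apply: functional_extensionality => i; case: eqP => [->|/eqP] // /hab.
have := H (tsubst sg t) v'; rewrite !eval_subst E ea E eb //.
Qed.

Lemma Theta_cong : is_congruence B Theta.
Proof.
split.
- by move=> x t v.
- by move=> x y H t v; rewrite H.
- by move=> x y z H1 H2 t v; rewrite H1 H2.
- move=> f a b H.
  pose mix (n : nat) : 'I_(arity f) -> B := fun i => if i < n then b i else a i.
  suff: forall n, n <= arity f -> Theta (interp B f a) (interp B f (mix n)).
    move=> /(_ (arity f) (leqnn _)).
    have -> : mix (arity f) = b.
      by apply: functional_extensionality => i; rewrite /mix ltn_ord.
    done.
  elim=> [|n IH] hn.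
  + have -> : mix 0 = a by apply: functional_extensionality => i; rewrite /mix.
    by move=> t v.
  + move=> t v; rewrite (IH (ltnW hn)).
    apply: (@Theta_step f (mix n) (mix n.+1) (Ordinal hn)).
    * rewrite /mix /= ltnn ltnSn; exact: H.
    * move=> i hi; rewrite /mix ltnS; case: (ltngtP i n) => //.
      by move=> hin; case/eqP: hi; apply: val_inj.
Qed.

Definition ThetaC : congruence B := Congruence Theta_cong.

Lemma Theta_sat p q : Theta p q -> P p -> P q.
Proof. by move=> H; have := H (Var 0) (fun _ => p); case. Qed.

Lemma Theta_max (r : congruence B) :
  (forall p q, r p q -> P p -> P q) -> subrel r Theta.
Proof.
move=> hr p q hpq t v; split.
- apply: hr; apply: (eval_congr (crelP r)) => -[|j] //=; exact: cg_refl.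
- apply: hr; apply: (eval_congr (crelP r)) => -[|j] //=; [exact: cg_sym | exact: cg_refl].
Qed.

End Theta.

Section Shift.
Variables (S : signature) (B : algebra S).
Hypothesis hB : modular_con B.

Lemma shifting (al be ga : congruence B) :
  subrel (cmeet al be) ga -> forall x y u v,
  al x y -> al u v -> be x u -> be y v -> ga u v -> ga x y.
Proof.
move=> hm x y u v axy auv bxu byv guv.
have := hB (al := cmeet ga al) (be := be) (ga := al).
move=> /(_ (fun a b => @proj2 _ _)) /(_ x y) H.
have : cmeet (cjoin (cmeet ga al) be) al x y.
  split=> //= r [s1 s2] cr.
  have rt := (match cr with And4 _ _ t _ => t end).
  have rs := (match cr with And4 _ s _ _ => s end).
  apply: (rt _ u); first exact: s2.
  apply: (rt _ v); first by apply: s1; split.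
  by apply: rs; apply: s2.
move=> /H /(_ ga) hh; apply: hh; last exact: crelP.
split; first by move=> a b [].
by move=> a b [h1 h2]; apply: hm; split.
Qed.
End Shift.


Section Cent.
Variables (S : signature) (A : algebra S).

Lemma finite_support (t : term S nat) : exists N, forall (w w' : nat -> A),
  (forall k, k < N -> w k = w' k) -> eval A w t = eval A w' t.
Proof.
elim: t => [x|f ts IH].
- by exists x.+1 => w w' h /=; apply: h.
- have [Nf hN] := fin_all_exists IH.
  exists (\max_(i < arity f) Nf i) => w w' h /=; congr (interp A f).
  apply: functional_extensionality => i; apply: hN => k hk; apply: h.
  apply: (leq_trans hk); exact: (leq_bigmax i).
Qed.

Definition mixv (isX : nat -> bool) (x u : nat -> A) : nat -> A :=
  fun k => if isX k then x k else u k.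

Lemma cent_nat (al be de : A -> A -> Prop) : centralizes A al be de ->
  forall (t : term S nat) (isX : nat -> bool) (x y u v : nat -> A),
  (forall k, al (x k) (y k)) -> (forall k, be (u k) (v k)) ->
  de (eval A (mixv isX x u) t) (eval A (mixv isX x v) t) ->
  de (eval A (mixv isX y u) t) (eval A (mixv isX y v) t).
Proof.
move=> H t isX x y u v hxy huv.
have [N hN] := finite_support t.
pose g (k : nat) : 'I_N.+1 + 'I_N.+1 :=
  if isX k then inl (inord k) else inr (inord k).
pose t2 := tsubst (fun k => Var (g k)) t.
have key (x' u' : nat -> A) :
  eval A (mixv isX x' u') t =
  eval A (sumval (fun i : 'I_N.+1 => x' i) (fun i : 'I_N.+1 => u' i)) t2.
  rewrite /t2 eval_subst; apply: hN => k hk /=.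
  rewrite /g /mixv; case: (isX k) => /=; rewrite inordK //; exact: ltnW.
rewrite !key => h.
by apply: (H _ _ t2 _ _ _ _ (fun i => hxy i) (fun i => huv i)).
Qed.

End Cent.


Section Prime.
Variables (S : signature) (E : identity S -> Prop).
Hypothesis hCM : cong_modular_variety E.
Hypothesis hSD : semi_degenerate E.
Variables (A : algebra S).
Hypothesis hA : satisfies E A.
Variables (al be : congruence A).

Notation B := (Apair be).
Notation dg := (@diag S A be).

Definition Delta (p q : B) : Prop :=
  forall r, (forall x y, al x y -> r (dg x) (dg y)) -> is_congruence B r -> r p q.
Definition DeltaC : congruence B :=
  Congruence (inter_cong B (fun r => forall x y, al x y -> r (dg x) (dg y))).

Lemma Delta_gen x y : al x y -> DeltaC (dg x) (dg y).
Proof. by move=> h r hr _; apply: hr. Qed.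

Lemma Delta_sub (r : congruence B) :
  (forall x y, al x y -> r (dg x) (dg y)) -> subrel DeltaC r.
Proof. by move=> h p q H; apply: H => //; exact: crelP. Qed.

Definition Dset (de : A -> A -> Prop) : B -> Prop :=
  fun p => de (proj1_sig p).1 (proj1_sig p).2.

Lemma gen_Theta (de : A -> A -> Prop) : centralizes A al be de ->
  forall x y, al x y -> Theta (Dset de) (dg x) (dg y).
Proof.
move=> hc x y hxy t v.
pose v1 k := (proj1_sig (v k)).1.
pose v2 k := (proj1_sig (v k)).2.
have hv k : be (v1 k) (v2 k) by exact: (proj2_sig (v k)).
have e1 z : (fun k => (proj1_sig (scons (dg z) v k)).1) = scons z v1.
  by apply: functional_extensionality => -[|k].
have e2 z : (fun k => (proj1_sig (scons (dg z) v k)).2) = scons z v2.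
  by apply: functional_extensionality => -[|k].
have em z (w : nat -> A) : mixv (fun k => k == 0) (fun _ => z) (scons z w) = scons z w.
  by apply: functional_extensionality => -[|k].
rewrite /Dset !eval_Apair /= !e1 !e2.
have huv k : be (scons x v1 k) (scons x v2 k).
  by case: k => [|k] /=; [exact: cg_refl | exact: hv].
have huv' k : be (scons y v1 k) (scons y v2 k).
  by case: k => [|k] /=; [exact: cg_refl | exact: hv].
split.
- move=> h.
  have := @cent_nat S A al be de hc t (fun k => k == 0) (fun _ => x) (fun _ => y)
            (scons x v1) (scons x v2) (fun _ => hxy) huv.
  rewrite !em => /(_ h).
  have -> : mixv (fun k => k == 0) (fun _ => y) (scons x v1) = scons y v1.
    by apply: functional_extensionality => -[|k].
  have -> : mixv (fun k => k == 0) (fun _ => y) (scons x v2) = scons y v2.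
    by apply: functional_extensionality => -[|k].
  done.
- move=> h.
  have := @cent_nat S A al be de hc t (fun k => k == 0) (fun _ => y) (fun _ => x)
            (scons y v1) (scons y v2) (fun _ => cg_sym hxy) huv'.
  rewrite !em => /(_ h).
  have -> : mixv (fun k => k == 0) (fun _ => x) (scons y v1) = scons x v1.
    by apply: functional_extensionality => -[|k].
  have -> : mixv (fun k => k == 0) (fun _ => x) (scons y v2) = scons x v2.
    by apply: functional_extensionality => -[|k].
  done.
Qed.

Lemma T_comm b d (hbd : be b d) :
  DeltaC (dg b) (exist _ (b, d) hbd) -> commutator A al be b d.
Proof.
move=> H de cde hc.
have := Delta_sub (r := ThetaC (Dset de)) (gen_Theta hc) H.
move=> /Theta_sat; apply; rewrite /Dset /=.
by case: cde => h _ _ _; apply: h.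
Qed.

Lemma hBmod : modular_con B.
Proof. apply: hCM; exact: Apair_sat. Qed.

Lemma R_comm (p q : B) (h : (proj1_sig p).1 = (proj1_sig q).1) :
  DeltaC p q -> commutator A al be (proj1_sig p).2 (proj1_sig q).2.
Proof.
move=> H.
have hbd : be (proj1_sig p).2 (proj1_sig q).2.
  apply: (cg_trans (y := (proj1_sig p).1)); first exact: cg_sym (proj2_sig p).
  rewrite h; exact: (proj2_sig q).
apply: (T_comm (hbd:=hbd)).
apply: (@shifting S B hBmod (pj0 be (cbot A)) (pj1 be (cbot A)) DeltaC _
          (dg (proj1_sig p).2) (exist (fun z : A * A => be z.1 z.2) ((proj1_sig p).2, (proj1_sig q).2) hbd) p q) => //.
move=> p' q' [h0 h1]; have -> : p' = q'.
  apply: sig_eq; move: h0 h1; rewrite /= /pj0_rel /pj1_rel /=.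
  by case: (proj1_sig p') => ? ?; case: (proj1_sig q') => ? ? /= -> ->.
exact: cg_refl.
Qed.

Lemma crit (mu : congruence A) :
  (forall p q : B, (proj1_sig p).1 = (proj1_sig q).1 -> DeltaC p q ->
     mu (proj1_sig p).2 (proj1_sig q).2) ->
  forall p q, DeltaC p q -> Dset mu p -> Dset mu q.
Proof.
move=> hR p q H hp.
have hal : al (proj1_sig p).1 (proj1_sig q).1.
  by apply: (Delta_sub (r := pj0 be al)) H => x y.
apply: (@shifting S B hBmod (pj0 be (cbot A)) DeltaC (pj1 be mu) _
          (dg (proj1_sig q).1) q (dg (proj1_sig p).1) p) => //.
- by move=> p' q' [h0 h1]; apply: hR.
- by apply: Delta_gen; apply: cg_sym.
- exact: cg_sym.
Qed.

Lemma nomax (mu : congruence A) :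
  subrel (commutator A al be) mu -> (forall x y, cjoin al mu x y) ->
  forall c d, be c d -> ~ mu c d -> False.
Proof.
move=> hc hj c d hcd hn.
have hsat := crit (fun p q h H => hc _ _ (R_comm h H)).
pose Th := ThetaC (Dset mu).
have DTh : subrel DeltaC Th by apply: Theta_max.
have muTh x y : mu x y -> Th (dg x) (dg y).
  move=> hxy; apply: (Theta_max (r := cmeet (pj0 be mu) (pj1 be mu))).
  - move=> p q [h0 h1] hp; rewrite /Dset.
    apply: (cg_trans (y := (proj1_sig p).1)); first exact: cg_sym h0.
    exact: cg_trans hp h1.
  - by split.
have Zc : is_congruence A (fun x y => Th (dg x) (dg y)).
  split.
  - move=> x; exact: cg_refl.
  - move=> x y; exact: cg_sym.
  - move=> x y z; exact: cg_trans.
  - by move=> f a b h; rewrite !diag_interp; apply: cg_comp.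
have hZ x y : Th (dg x) (dg y).
  apply: (hj x y (fun x y => Th (dg x) (dg y))) => //; split.
  - by move=> u v /Delta_gen /DTh.
  - exact: muTh.
have hQ := Aquot_sat (r := Th) (Apair_sat (be := be) hA).
apply: (hSD hQ).
- exists (cls Th (dg c)), (cls Th (exist _ (c, d) hcd)) => /cls_eq /Theta_sat h.
  by apply: hn; apply: h; rewrite /Dset /=; exact: cg_refl.
- exists (cls Th (dg c)) => f args hargs /=; rewrite /q_interp; apply/cls_eq.
  apply: (cg_trans (y := interp B f (fun _ => dg c))).
    by apply: cg_comp => i; rewrite hargs; exact: rep_cls.
  rewrite -diag_interp; exact: hZ.
Qed.

End Prime.


Section Zorn.
Variables (S : signature) (E : identity S -> Prop).
Hypothesis hCM : cong_modular_variety E.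
Hypothesis hSD : semi_degenerate E.
Variables (A : algebra S).
Hypothesis hA : satisfies E A.
Variable th : congruence A.

Definition proper (r : congruence A) := exists x y, ~ r x y.
Definition Tc := {r : congruence A | subrel th r /\ proper r}.
Definition Rc (s t : Tc) : bool := boolp.asbool (subrel (proj1_sig s) (proj1_sig t)).

Lemma RcP s t : Rc s t <-> subrel (proj1_sig s) (proj1_sig t).
Proof. by split => [/boolp.asboolP|/boolp.asboolP]. Qed.
Lemma RcI (s t : Tc) : subrel (proj1_sig s) (proj1_sig t) -> Rc s t.
Proof. by move/RcP. Qed.
Lemma RcE (s t : Tc) : Rc s t -> subrel (proj1_sig s) (proj1_sig t).
Proof. by move/RcP. Qed.

Section Chain.
Variable C : Tc -> Prop.
Hypothesis Ctot : classical_sets.total_on C (fun x y => Rc x y).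
Variable s0 : Tc.
Hypothesis Cs0 : C s0.

Definition J := {s : Tc | C s}.
Definition jr (j : J) : congruence A := proj1_sig (proj1_sig j).

Lemma jtot (j1 j2 : J) : subrel (jr j1) (jr j2) \/ subrel (jr j2) (jr j1).
Proof.
by case: (Ctot (proj2_sig j1) (proj2_sig j2)) => /RcP h; [left|right].
Qed.

Lemma ub n (g : 'I_n -> J) : exists j0 : J, forall i, subrel (jr (g i)) (jr j0).
Proof.
elim: n g => [|n IH] g.
  by exists (exist _ s0 Cs0) => -[].
have [j1 h1] := IH (fun i => g (lift ord0 i)).
case: (jtot (g ord0) j1) => h.
- exists j1 => i; case: (unliftP ord0 i) => [i' ->|->] //.
- exists (g ord0) => i; case: (unliftP ord0 i) => [i' ->|->] //.
  move=> x y /h1; exact: h.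
Qed.

Definition Urel (x y : A) := exists j : J, jr j x y.

Lemma Ucong : is_congruence A Urel.
Proof.
split.
- by move=> x; exists (exist _ s0 Cs0); exact: cg_refl.
- by move=> x y [j h]; exists j; exact: cg_sym.
- move=> x y z [j1 h1] [j2 h2]; case: (jtot j1 j2) => h.
  + by exists j2; apply: cg_trans h2; apply: h.
  + by exists j1; apply: cg_trans h1 _; apply: h.
- move=> f a b H; have [g hg] := fin_all_exists H.
  have [j0 h0] := ub g; exists j0; apply: cg_comp => i; apply: h0; exact: hg.
Qed.

Definition ev (p q : Apow A J) :=
  exists j0 : J, forall j : J, subrel (jr j0) (jr j) -> jr j (p j) (q j).

Lemma evcong : is_congruence (Apow A J) ev.
Proof.
split.
- by move=> p; exists (exist _ s0 Cs0) => j _; exact: cg_refl.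
- by move=> p q [j0 h]; exists j0 => j hj; apply: cg_sym; apply: h.
- move=> p q r [j1 h1] [j2 h2]; case: (jtot j1 j2) => h.
  + exists j2 => j hj; apply: (cg_trans (h1 _ _)) (h2 _ hj).
    by move=> x y /h /hj.
  + exists j1 => j hj; apply: (cg_trans (h1 _ hj)) (h2 _ _).
    by move=> x y /h /hj.
- move=> f a b H; have [g hg] := fin_all_exists H.
  have [j0 h0] := ub g; exists j0 => j hj.
  apply: cg_comp => i; apply: hg => x y /h0 /hj; exact.
Qed.

Lemma compact : ~ (forall x y, Urel x y).
Proof.
move=> hU.
pose evC := Congruence evcong.
have hQ := Aquot_sat (r := evC) (Apow_sat (J := J) hA).
have pr (j : J) : proper (jr j) by exact: (proj2 (proj2_sig (proj1_sig j))).
pose bx (j : J) := proj1_sig (constructive_indefinite_description _ (pr j)).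
have pby (j : J) : exists y, ~ jr j (bx j) y.
  exact: (proj2_sig (constructive_indefinite_description _ (pr j))).
pose by_ (j : J) := proj1_sig (constructive_indefinite_description _ (pby j)).
have hby (j : J) : ~ jr j (bx j) (by_ j).
  exact: (proj2_sig (constructive_indefinite_description _ (pby j))).
have [a0 _] := pr (exist _ s0 Cs0).
apply: (hSD hQ).
- exists (cls evC (bx : Apow A J)), (cls evC (by_ : Apow A J)) => /cls_eq [j0 h].
  by apply: (hby j0); apply: h.
- exists (cls evC (fun _ : J => a0)) => f args hargs /=; rewrite /q_interp.
  apply/cls_eq.
  apply: (cg_trans (y := interp (Apow A J) f (fun _ => fun _ : J => a0))).
    by apply: cg_comp => i; rewrite hargs; exact: rep_cls.
  have [j1 h1] := hU (interp A f (fun _ => a0)) a0.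
  by exists j1 => j hj; apply: hj.
Qed.

End Chain.

Lemma exists_prime : proper th -> exists phi : congruence A, prime_cong phi /\ subrel th phi.
Proof.
move=> pth.
have t0 : Tc by exists th; split.
have hch : forall C : classical_sets.set Tc, classical_sets.total_on C (fun x y => Rc x y) ->
    exists t, forall s, C s -> Rc s t.
  move=> C Ctot.
  case: (classic (exists s, C s)) => [[s0 Cs0]|hne]; last first.
    by exists t0 => s Cs; exfalso; apply: hne; exists s.
  have uc := Ucong Ctot Cs0.
  pose U := Congruence uc.
  have Uth : subrel th U.
    move=> x y h; rewrite /U /= /Urel; exists (exist _ s0 Cs0); exact: (proj1 (proj2_sig s0) x y h).
  have Upr : proper U.
    apply: NNPP => h; apply: (compact Ctot Cs0) => x y.
    apply: NNPP => h2; apply: h; exists x, y; exact: h2.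
  exists (exist _ U (conj Uth Upr)) => s Cs; apply: RcI => x y h.
  by exists (exist _ s Cs).
have [t tmax] := @classical_sets.ZL_preorder Tc t0 Rc
  (fun t => RcI (fun x y h => h))
  (fun r s t h1 h2 => RcI (fun x y h => RcE h2 (RcE h1 h))) hch.
  exists (proj1_sig t); split; last exact: (proj1 (proj2_sig t)).
  split; first exact: (proj2 (proj2_sig t)).
  move=> al be hc.
  apply: NNPP => hn.
  have hal : ~ subrel al (proj1_sig t) by move=> h; apply: hn; left.
  have hbe : ~ subrel be (proj1_sig t) by move=> h; apply: hn; right.
  have hj : forall x y, cjoin al (proj1_sig t) x y.
    apply: NNPP => hnj.
    have [x hx] := not_all_ex_not _ _ hnj.
    have [y hy] := not_all_ex_not _ _ hx.
    have hsub : subrel (proj1_sig t) (cjoin al (proj1_sig t)).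
      by move=> a b hab r [_ s2] _; apply: s2.
    pose s : Tc := exist _ (cjoin al (proj1_sig t))
       (conj (fun a b h => hsub a b (proj1 (proj2_sig t) a b h)) (ex_intro _ x (ex_intro _ y hy))).
    have := tmax s (RcI (s:=t) (t:=s) hsub) => /RcE h.
    apply: hal => a b hab; apply: h => r [s1 _] _; exact: s1.
  have [c hc1] := not_all_ex_not _ _ hbe.
  have [d hd] := not_all_ex_not _ _ hc1.
  have [hcd hncd] : be c d /\ ~ proj1_sig t c d.
    by split; [apply: NNPP => h; apply: hd => h2; exfalso; exact: h | move=> h; apply: hd].
  exact: (nomax hCM hSD hA hc hj hcd hncd).
Qed.

Lemma PA_lemma : (forall a b, rho A th a b) -> forall a b, th a b.
Proof.
move=> hr a b; apply: NNPP => hn.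
have [phi [pphi sub]] := exists_prime (ex_intro _ a (ex_intro _ b hn)).
have [[x [y hxy]] _] := pphi.
by apply: hxy; apply: (hr x y phi).
Qed.

End Zorn.


Section Main.
Variables (S : signature) (A : algebra S).
Hypothesis sp : semiprime A.
Hypothesis PAh : forall th : congruence A, (forall a b, rho A th a b) -> forall a b, th a b.

Lemma releq_rad (x y : congruence A) : releq x y -> rad_equiv x y.
Proof. by move=> [h1 h2]; split; apply: rho_mono. Qed.

Lemma KA (x : congruence A) : releq x (cbot A) <-> rad_equiv x (cbot A).
Proof.
split; first exact: releq_rad.
move=> [h1 h2]; split; last by move=> a b /= ->; apply: cg_refl.
move=> a b /rho_ext /h1 H; case: sp => h _; exact: h.
Qed.

Lemma SATg (x u x' u' : congruence A) :
  subrel (rho A x') (rho A x) -> subrel (rho A u') (rho A u) ->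
  rad_equiv (cmeet x u) (cbot A) -> rad_equiv (cmeet x' u') (cbot A).
Proof.
move=> hx hu [h1 h2]; split.
- move=> a b /rho_meet_inv [/hx ha /hu hb]; apply: h1; exact: rho_meet.
- apply: rho_mono => a b /= ->; split; apply: cg_refl.
Qed.

Lemma rad_sub (x y : congruence A) : rad_equiv x y -> subrel (rho A x) (rho A y).
Proof. by case. Qed.
Lemma rad_sub' (x y : congruence A) : rad_equiv x y -> subrel (rho A y) (rho A x).
Proof. by case. Qed.

Lemma meet_le (x e : congruence A) : sle (Con A) (cmeet x e) e.
Proof. by split; [move=> a b [[]]|move=> a b [h1 h2]; split=> //; split]. Qed.

Lemma main_equiv (K : Type) : cond1 K (Con A) <-> cond1 K (ConQ A).
Proof.
split.
- move=> H U [f Hf].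
  pose U' := fun x => exists k, x = f k /\ exists u, U u /\ rad_equiv u (f k).
  have cU' : card_le (Con A) U' K.
    by exists f => u [k [-> _]]; exists k; split.
  have [e [[g [eg1 eg2]] He]] := H U' cU'.
  exists e; split; first by exists g; split; apply: releq_rad.
  move=> x; split.
  + move=> Hx; apply/releq_rad; apply/He => u [k [-> [u0 [U0 eq0]]]].
    apply/KA; apply: (SATg _ _ (Hx _ U0)) => //; exact: rad_sub'.
  + move=> Hx u Uu; have [k eqk] := Hf u Uu.
    have : in_Ann (Con A) U' (cmeet x e) by apply/He; exact: meet_le.
    move=> /(_ (f k)) H1.
    have /KA H2 : releq (cmeet (cmeet x e) (f k)) (cbot A).
      by apply: H1; exists k; split=> //; exists u.
    apply: (SATg _ _ H2); [exact: rad_sub' | exact: rad_sub].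
- move=> H U [f Hf].
  have cU : card_le (ConQ A) U K.
    by exists f => u /Hf [k hk]; exists k; apply: releq_rad.
  have [e [[g [eg1 eg2]] He]] := H U cU.
  exists (rcong e); split.
  + exists g; split.
    * split; last by move=> a b ->; apply: cg_refl.
      move=> a b [h1 h2]; have : rho A (cmeet e g) a b.
        by apply: rho_meet => //; apply: rho_ext.
      move=> /(rad_sub eg1) h; case: sp => hs _; exact: hs.
    * split=> // a b _; apply: PAh => c d.
      have : rho A (cjoin e g) c d by apply: (rad_sub' eg2); apply: rho_top.
      apply: rho_mono => p q Hpq r [s1 s2] cr.
      apply: Hpq cr; split=> // x y hxy; apply: s1; exact: rho_ext.
  + move=> x.
    have E1 : in_Ann (Con A) U x <-> in_Ann (ConQ A) U x.
      by split=> h u Uu; apply/KA; apply: h.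
    rewrite E1 He; split.
    * move=> [h1 h2]; split; first by move=> a b [].
      move=> a b hab; split=> //.
      have : rho A (cmeet x e) a b by apply: h2; apply: rho_ext.
      by move=> /rho_meet_inv [].
    * move=> [h1 h2]; split.
        by apply: rho_mono => a b [].
      move=> a b hab; apply: rho_meet => //.
      apply: rho_idem; apply: rho_mono hab => c d hcd.
      by have [] := h2 c d hcd.
Qed.

End Main.


Theorem proposition2p14 (S : signature) (E : identity S -> Prop)
    (A : algebra S) (K : Type) :
  cong_modular_variety E -> semi_degenerate E -> satisfies E A ->
  semiprime A -> inhabited K ->
  (cond1 K (Con A) <-> cond1 K (ConQ A)).
Proof.
move=> hCM hSD hA sp _.
apply: main_equiv => // th; exact: (PA_lemma hCM hSD hA (th := th)).
Qed.
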